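(* In the Hidden Hallucination algorithm described in the context, for every phase $\ell$, the censored ledger $\lambda_{\mathrm{cens},\ell}$ and the honest ledger $\lambda_{\mathrm{hon},\ell}$ are both hygienic; that is, for $\hat\lambda\in\{\lambda_{\mathrm{cens},\ell},\lambda_{\mathrm{hon},\ell}\}$, \[\Pr[\mu_\star\in\cdot\mid\hat\lambda]=\Pr_{\mathrm{can}}[\mu_\star\in\cdot\mid\hat\lambda],\] where the left side is the true Bayesian posterior of $\mu_\star$ given the realized value of the random ledger $\hat\lambda$ (including its policies and censoring set) generated by the algorithm and the agents' behavior.
   Context: MDPs. Fix positive integers $S,A,H$. An MDP model $\mu$ specifies for each triple $(x,a,h)\in[S]\times[A]\times[H]$ a reward distribution $R_\mu(x,a,h)$ on $[0,1]$ (all supported on a common countable set) with mean $r_\mu(x,a,h)$, transition distribution $p_\mu(\cdot\mid x,a,h)$ on $[S]$ and initial distribution $p_\mu(\cdot\mid0)$; an episode generates a trajectory $(x_h,a_h,r_h,h)_{h\in[H]}$ with $x_1\sim p_\mu(\cdot\mid0)$, $r_h\sim R_\mu(x_h,a_h,h)$, $x_{h+1}\sim p_\mu(\cdot\mid x_h,a_h,h)$. $\Pi_{\mathrm{mkv}}$ is the set of deterministic Markov policies $\pi:[S]\times[H]\to[A]$; $V(\pi,\mu)$ is the expected total reward. Incentivized RL. A prior $\mathbf{p}$ over models is known to all; $\mu_\star\sim\mathbf{p}$. In each episode $k$ the principal chooses a signal $\sigma_k$ via a known algorithm; agent $k$ chooses $\pi_k\in\arg\max_{\pi\in\Pi_{\mathrm{mkv}}}\mathbb{E}[V(\pi,\mu_\star)\mid\sigma_k]$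 (fixed known tie-breaking); $\pi_k$ is run in $\mu_\star$ producing trajectory $\tau_k$ observed by the principal. Ledgers and canonical posteriors. A ledger $\lambda$ consists of a censoring set $\mathcal{U}_\lambda\subseteq[S]\times[A]\times[H]$ and a finite sequence $(\pi_i,\tau_i)_{i=1}^m$ of policies and trajectories with the rewards at stages $h$ with $(x_h,a_h,h)\in\mathcal{U}_\lambda$ removed. The canonical posterior $\Pr_{\mathrm{can}}[\cdot\mid\lambda]$ is the conditional law of $\mu_\star$ given $\hat\lambda'=\lambda$, where $\mu_\star\sim\mathbf{p}$ and $\hat\lambda'$ is obtained by running each of the fixed (treated as non-random) policies $\pi_1,\dots,\pi_m$ once, independently, in $\mu_\star$ and removing rewards at triples in $\mathcal{U}_\lambda$. Algorithm (Hidden Hallucination), inputs $N_{\mathrm{ph}},n_{\mathrm{lrn}},\varepsilon_{\mathrm{pun}}$. Phase $\ell$ = episodes $(\ell-1)N_{\mathrm{ph}}+1,\dots,\ell N_{\mathrm{ph}}$, hallucination episode $k_\ell$ uniform in the phase. $\mathcal{U}_\ell$ = set of triples visited in fewer than $n_{\mathrm{lrn}}$ of the episodes $k_1,\dots,k_{\ell-1}$ (under-explored); other triples are fully explored. $\lambda_{\mathrm{cens},\ell}$: the pairs $(\pi_{k_j},\tau_{k_j})_{j<\ell}$ with all rewards removed; $\lambda_{\mathrm{hon},\ell}$: the same pairs with censoring set $\mathcal{U}_\ell$. Punish event $\mathcal{E}_{\mathrm{pun},\ell}=\{r_{\mu_\star}(x,a,h)\le\varepsilon_{\mathrm{pun}}\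 \forall(x,a,h)\notin\mathcal{U}_\ell\}$. At $k=k_\ell$: draw $\mu_{\mathrm{hal},\ell}$ from the posterior of $\mu_\star$ given $\lambda_{\mathrm{cens},\ell}$ and $\mathcal{E}_{\mathrm{pun},\ell}$, and form $\lambda_{\mathrm{hal},\ell}$ with censoring set $\mathcal{U}_\ell$ and each occurrence of a fully explored triple $(x,a,h)$ given an independent reward from $R_{\mu_{\mathrm{hal},\ell}}(x,a,h)$. The signal is $\lambda_{\mathrm{hal},\ell}$ at $k=k_\ell$ and $\lambda_{\mathrm{hon},\ell}$ otherwise in phase $\ell$. *)

(* Defs.v *)
From HB Require Import structures.
From mathcomp Require Import all_boot all_order all_algebra.
From mathcomp Require Import all_classical all_reals.
From mathcomp Require Import ereal topology normedtype sequences esum measure lebesgue_measure lebesgue_integral probability.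

Set Implicit Arguments.
Unset Strict Implicit.
Unset Printing Implicit Defensive.
Import Order.TTheory GRing.Theory Num.Theory.
Local Open Scope ring_scope.
Local Open Scope classical_set_scope.

Section MDP.
Variables (R : realType) (S A H : nat).

Definition Triple := ('I_S * 'I_A * 'I_H)%type.
Definition Pol := {ffun 'I_S * 'I_H -> 'I_A}.

(** An MDP model.  Rewards take values in the common countable set
    [{ rv k | k : nat }], so a reward distribution is a pmf on nat. *)
Record model := Model {
  init : 'I_S -> R;
  trans : 'I_S -> 'I_A -> 'I_H -> 'I_S -> R;
  rew : 'I_S -> 'I_A -> 'I_H -> nat -> R
}.

Definition valid_model (m : model) : Prop :=
  [/\ (forall x, 0 <= init m x) /\ \sum_x init m x = 1,
      (forall x a h y, 0 <= trans m x a h y),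
      (forall x a h, \sum_y trans m x a h y = 1),
      (forall x a h k, 0 <= rew m x a h k) &
      (forall x a h, (\sum_(k <oo) (rew m x a h k)%:E)%E = 1%E)].

Variable rv : nat -> R.  (* reward value of index k, in [0,1] *)

Definition meanrew (m : model) (x : 'I_S) (a : 'I_A) (h : 'I_H) : R :=
  fine (\sum_(k <oo) ((rew m x a h k * rv k)%:E))%E.

Definition pathprob (m : model) (pi : Pol) (xs : {ffun 'I_H -> 'I_S}) : R :=
  (\prod_(i < H | (i == 0%N :> nat)) init m (xs i)) *
  \prod_(i < H) \prod_(j < H | (j == i.+1 :> nat)) trans m (xs i) (pi (xs i, i)) i (xs j).

Definition value (pi : Pol) (m : model) : R :=
  \sum_(xs : {ffun 'I_H -> 'I_S})
     pathprob m pi xs * \sum_(i < H) meanrew m (xs i) (pi (xs i, i)) i.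

(** trajectories (x_h, a_h, r_h)_h ; r_h is a reward index *)
Definition Step := ('I_S * 'I_A * nat)%type.
Definition Traj := (H.-tuple Step)%type.
Definition CStep := ('I_S * 'I_A * option nat)%type.
Definition CTraj := (H.-tuple CStep)%type.

(** ledger: censoring set and sequence of (policy, reward-censored trajectory) *)
Definition ledger := ({set Triple} * seq (Pol * CTraj))%type.

Definition triple_at (tau : Traj) (i : 'I_H) : Triple :=
  ((tnth tau i).1.1, (tnth tau i).1.2, i).

Definition censor (U : {set Triple}) (tau : Traj) : CTraj :=
  [tuple (((tnth tau i).1.1, (tnth tau i).1.2,
           if triple_at tau i \in U then None else Some (tnth tau i).2) : CStep) | i < H].

Definition trajprob (m : model) (pi : Pol) (tau : Traj) : R :=
  (\prod_(i < H | (i == 0%N :> nat)) init m (tnth tau i).1.1) *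
  (\prod_(i < H) (((tnth tau i).1.2 == pi ((tnth tau i).1.1, i))%:R *
                  rew m (tnth tau i).1.1 (tnth tau i).1.2 i (tnth tau i).2)) *
  \prod_(i < H) \prod_(j < H | (j == i.+1 :> nat))
      trans m (tnth tau i).1.1 (tnth tau i).1.2 i (tnth tau j).1.1.

Definition cprob (m : model) (U : {set Triple}) (pi : Pol) (c : CTraj) : \bar R :=
  (\esum_(tau in [set tau : Traj | censor U tau = c]) (trajprob m pi tau)%:E)%E.

(** likelihood of ledger lam under the canonical sampling: each policy run once,
    independently, rewards at triples of the censoring set removed *)
Definition can_lik (m : model) (lam : ledger) : \bar R :=
  (\prod_(p <- lam.2) cprob m lam.1 p.1 p.2)%E.

Variables (d : measure_display) (M : measurableType d) (P : probability M R)
          (mdl : M -> model).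

Definition can_post (lam : ledger) (B : set M) : R :=
  fine (\int[P]_(y in B) can_lik (mdl y) lam)%E /
  fine (\int[P]_(y in setT) can_lik (mdl y) lam)%E.

Variables (Nph nlrn : nat) (epsp : R) (tb : {set Pol} -> Pol).

(** one record per phase: offset of the hallucination episode k_l in the phase,
    the signal lambda_hal given to agent k_l, its policy, and its trajectory *)
Definition rec := ('I_Nph * ledger * Pol * Traj)%type.
Definition r_off (r : rec) : 'I_Nph := r.1.1.1.
Definition r_sig (r : rec) : ledger := r.1.1.2.
Definition r_pol (r : rec) : Pol := r.1.2.
Definition r_traj (r : rec) : Traj := r.2.

Definition visited (tau : Traj) (t : Triple) : bool := triple_at tau t.2 == t.

Definition Ucal (h : seq rec) : {set Triple} :=
  [set t | (count (fun r => visited (r_traj r) t) h < nlrn)%N].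

Definition cens_ledger (h : seq rec) : ledger :=
  ([set: Triple]%SET, [seq (r_pol r, censor [set: Triple]%SET (r_traj r)) | r <- h]).

Definition hon_ledger (h : seq rec) : ledger :=
  (Ucal h, [seq (r_pol r, censor (Ucal h) (r_traj r)) | r <- h]).

Definition pattern (c : CTraj) : seq ('I_S * 'I_A * bool) :=
  [seq (s.1.1, s.1.2, s.2 != None) | s <- c].

(** probability, when mu_hal = m, that the hallucinated ledger equals sig *)
Definition halprob (m : model) (h : seq rec) (sig : ledger) : R :=
  if (sig.1 == Ucal h) &&
     ([seq (p.1, pattern p.2) | p <- sig.2] ==
      [seq (r_pol r, pattern (censor (Ucal h) (r_traj r))) | r <- h])
  then \prod_(p <- sig.2) \prod_(i < H)
         (if (tnth p.2 i).2 is Some k then rew m (tnth p.2 i).1.1 (tnth p.2 i).1.2 i k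
          else 1)
  else 0.

Definition Epun (U : {set Triple}) : set M :=
  [set y | forall t : Triple, t \notin U -> meanrew (mdl y) t.1.1 t.1.2 t.2 <= epsp].

Section Step.
(** W : density (w.r.t. the prior) of the histories of length n, i.e.
    Pr[mu_star in B, history = h] = int_B W h dP. *)
Variables (W : seq rec -> M -> \bar R) (n : nat).

(** law of lambda_hal in phase n+1 given the history h (length n): mu_hal is drawn
    from the posterior of mu_star given lambda_cens and E_pun (from the prior if this
    event has probability 0) *)
Definition Qhal (h : seq rec) (sig : ledger) : R :=
  let D := [set h' : seq rec | size h' = n /\ cens_ledger h' = cens_ledger h] in
  let E := Epun (Ucal h) in
  let den := (\esum_(h' in D) \int[P]_(y in E) W h' y)%E in
  let num := (\esum_(h' in D) \int[P]_(y in E) ((halprob (mdl y) h sig)%:E * W h' y))%E in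
  if den == 0%E then fine (\int[P]_(y in setT) (halprob (mdl y) h sig)%:E)%E
  else fine num / fine den.

(** E[ f(mu_star) ; sigma_k = s ] for an episode k of phase n+1 *)
Definition sigjoint (s : ledger) (f : M -> \bar R) : \bar R :=
  (\esum_(h in [set h : seq rec | size h = n])
     ((((Nph%:R)^-1 * Qhal h s)%:E * \int[P]_(y in setT) (f y * W h y)) +
      (if hon_ledger h == s
       then ((Nph.-1)%:R / Nph%:R)%:E * \int[P]_(y in setT) (f y * W h y)
       else 0)))%E.

Definition condexp (s : ledger) (f : M -> \bar R) : R :=
  fine (sigjoint s f) / fine (sigjoint s (fun _ => 1%E)).

Definition agent (s : ledger) : Pol :=
  tb [set pi : Pol | [forall pi' : Pol,
        condexp s (fun y => (value pi' (mdl y))%:E) <=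
        condexp s (fun y => (value pi (mdl y))%:E)]].

Definition stepw (h : seq rec) (r : rec) (y : M) : \bar R :=
  ((Nph%:R)^-1 * Qhal h (r_sig r) * (r_pol r == agent (r_sig r))%:R *
   trajprob (mdl y) (r_pol r) (r_traj r))%:E.
End Step.

Fixpoint Wfun (n : nat) : seq rec -> M -> \bar R :=
  match n with
  | 0 => fun h _ => if h is [::] then 1%E else 0%E
  | n'.+1 => fun h y =>
      if size h == n'.+1 then
        match drop n' h with
        | [:: r] => (Wfun n' (take n' h) y * stepw (Wfun n') n' (take n' h) r y)%E
        | _ => 0%E
        end
      else Wfun n' h y
  end.

Definition W (h : seq rec) (y : M) : \bar R := Wfun (size h) h y.

Definition joint (L : seq rec -> ledger) (l : nat) (lam : ledger) (B : set M) : \bar R :=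
  (\esum_(h in [set h : seq rec | size h = l.-1 /\ L h = lam]) \int[P]_(y in B) W h y)%E.

Definition true_post (L : seq rec -> ledger) (l : nat) (lam : ledger) (B : set M) : R :=
  fine (joint L l lam B) / fine (joint L l lam setT).

End MDP.

(* Main.v *)
Require Import Defs.
From HB Require Import structures.
From mathcomp Require Import all_boot all_order all_algebra.
From mathcomp Require Import all_classical all_reals.
From mathcomp Require Import ereal topology normedtype sequences esum measure lebesgue_measure lebesgue_integral probability.
From mathcomp Require Import measurable_realfun.
From mathcomp Require Import lra.
Import Order.TTheory GRing.Theory Num.Theory.
Local Open Scope ring_scope.
Local Open Scope classical_set_scope.

Section Gen.
Local Open Scope ereal_scope.

Lemma esum_series (R : realType) (T : countType) (I : set T) (a : T -> \bar R) :
  (forall t, I t -> 0 <= a t) ->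
  \esum_(t in I) a t =
  \sum_(n <oo) oapp (fun t => if t \in I then a t else 0) 0 (pickle_inv n).
Proof.
move=> a0; rewrite esum_mkcond.
set b := fun n : nat => oapp (fun t => if t \in I then a t else 0) 0 (pickle_inv n).
have b0 n : 0 <= b n.
  rewrite /b; case: (pickle_inv n) => [t|] //=; case: ifPn => // /[!inE]; exact: a0.
rewrite nneseries_esumT //.
rewrite (esumID (range (@pickle T)) [set: nat]) //; rewrite ?setTI.
rewrite [X in _ + X]esum1 ?adde0; last first.
  move=> n; rewrite ?setTI /= => nr; rewrite /b.
  case E: (pickle_inv n) => [t|] //=.
  exfalso; apply: nr; exists t => //.
  by have := @pickle_invK T n; rewrite /= E.
rewrite (reindex_esum [set: T] (range pickle) pickle) //; last first.
  split.
  - by move=> t _; exists t.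
  - by move=> x y _ _; apply: (pcan_inj (@pickleK_inv T)).
  - by move=> n [t _ <-]; exists t.
  by apply: eq_esum => t _; rewrite /b pickleK_inv /=.
by move=> n _; exact: b0.
Qed.

Lemma esum_sub (R : realType) (T : choiceType) (I J : set T) (a : T -> \bar R) :
  I `<=` J -> (forall t, J t -> 0 <= a t) ->
  \esum_(t in I) a t <= \esum_(t in J) a t.
Proof.
move=> IJ a0; rewrite (esum_mkcond I) (esum_mkcond J); apply: le_esum => t _.
case: (boolP (t \in I)) => It.
  by rewrite ifT //; move: It; rewrite !inE; exact: IJ.
by case: (boolP (t \in J)) => // Jt; apply: a0; move: Jt; rewrite inE.
Qed.

Lemma esumZl (R : realType) (T : countType) (I : set T) (a : T -> \bar R) (c : R) :
  (0 <= c)%R -> (forall t, I t -> 0 <= a t) ->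
  \esum_(t in I) (c%:E * a t) = c%:E * \esum_(t in I) a t.
Proof.
move=> c0 a0; rewrite esum_series; last by move=> t It; rewrite mule_ge0 // a0.
rewrite esum_series // -nneseriesZl; last first.
  by move=> n _; case: (pickle_inv n) => [t|] //=; case: ifPn => // /[!inE]; exact: a0.
apply: eq_eseriesr => n _; case: (pickle_inv n) => [t|] /=; last by rewrite mule0.
by case: ifPn => //; rewrite mule0.
Qed.

Lemma esum_ge1 (R : realType) (T : choiceType) (I : set T) (a : T -> \bar R) t :
  (forall t, I t -> 0 <= a t) -> I t -> a t <= \esum_(i in I) a i.
Proof.
move=> a0 It; apply: esum_ge; exists [set t]; last by rewrite fsbig_set1.
by split; [exact: finite_set1 | move=> x ->].
Qed.

Lemma esumeMl (R : realType) (T : countType) (I : set T) (a : T -> \bar R) (c : \bar R) :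
  0 <= c -> (forall t, I t -> 0 <= a t) ->
  \esum_(t in I) (c * a t) = c * \esum_(t in I) a t.
Proof.
move=> c0 a0; case: c c0 => [c c0|c0|c0]; first by rewrite esumZl.
  2: by move: c0; rewrite leNgt ltNyr.
have [S0|] := eqVneq (\esum_(t in I) a t) 0.
  rewrite S0 mule0 esum1 // => t It.
  have : a t <= 0 by rewrite -S0 esum_ge1.
  move=> at0; have -> : a t = 0 by apply/eqP; rewrite eq_le at0 a0.
  by rewrite mule0.
move=> Sn0.
have [t It atp] : exists2 t, I t & 0 < a t.
  apply/not_exists2P => hn; apply/negP: Sn0; rewrite negbK; apply/eqP.
  apply: esum1 => t It; have := hn t; move=> hh.
  case: hh => // hh.
  have at0 : a t <= 0 by rewrite leNgt; apply/negP.
  by apply/eqP; rewrite eq_le at0 a0.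
have Spos : 0 < \esum_(i in I) a i by rewrite (lt_le_trans atp) // esum_ge1.
rewrite gt0_mulye //; apply/eqP; rewrite eq_le leey /=.
have := @esum_ge1 R T I (fun i => +oo * a i) t _ It; rewrite /= gt0_mulye //; apply.
by move=> i Ii; rewrite mule_ge0 // a0.
Qed.

Lemma esumeMr (R : realType) (T : countType) (I : set T) (a : T -> \bar R) (c : \bar R) :
  0 <= c -> (forall t, I t -> 0 <= a t) ->
  \esum_(t in I) (a t * c) = (\esum_(t in I) a t) * c.
Proof.
move=> c0 a0; rewrite [RHS]muleC -esumeMl //; apply: eq_esum => t _; exact: muleC.
Qed.

Lemma esum_swap (R : realType) (T1 T2 : choiceType) (I : set T1) (J : set T2)
  (a : T1 -> T2 -> \bar R) :
  (forall i j, I i -> J j -> 0 <= a i j) ->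
  \esum_(i in I) \esum_(j in J) a i j = \esum_(j in J) \esum_(i in I) a i j.
Proof.
move=> a0; rewrite (esum_esum (J := fun _ => J)) //.
rewrite (esum_esum (J := fun _ => I)); last by move=> j i Jj Ii; exact: a0.
rewrite (reindex_esum (J `*`` fun=> I) (I `*`` fun=> J) (fun x => (x.2, x.1))) //.
split.
- by move=> [j i] [/= Jj Ii]; split.
- by move=> [j1 i1] [j2 i2] /= _ _ [-> ->].
- by move=> [i j] [/= Ii Jj]; exists (j, i).
Qed.

Fixpoint wprod (R : realType) (X : Type) (w : nat -> X -> R) (k : nat) (s : seq X) : R :=
  match s with [::] => 1%R | x :: s' => (w k x * wprod R X w k.+1 s')%R end.
Arguments wprod {R X}.

Lemma wprodE (R : realType) (X : Type) (w : nat -> X -> R) (x0 : X) s k :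
  wprod w k s = (\prod_(0 <= j < size s) w (k + j)%N (nth x0 s j))%R.
Proof.
elim: s k => [|x s IH] k /=; first by rewrite big_geq.
by rewrite big_nat_recl // addn0 IH; congr (_ * _)%R; apply: eq_bigr => j _; rewrite addSnnS.
Qed.

Lemma wprod_ge0 (R : realType) (X : Type) (w : nat -> X -> R) s k :
  (forall k x, (0 <= w k x)%R) -> (0 <= wprod w k s)%R.
Proof. by move=> w0; elim: s k => [|x s IH] k //=; rewrite mulr_ge0. Qed.

Lemma esum_wprod (R : realType) (X : countType) (Y : eqType) (g : X -> Y)
  (w : nat -> X -> R) :
  (forall k x, (0 <= w k x)%R) ->
  (forall k y, \esum_(x in [set x | g x = y]) (w k x)%:E <= 1) ->
  forall q k, \esum_(s in [set s : seq X | map g s = q]) (wprod w k s)%:E <= 1.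
Proof.
move=> w0 hw; elim=> [|y q IH] k.
  rewrite (_ : [set s : seq X | map g s = [::]] = [set [::]]).
    by rewrite esum_set1 //= lee_fin.
  by apply/seteqP; split => s /=; [case: s | move->].
rewrite (reindex_esum ([set x | g x = y] `*`` fun=> [set s : seq X | map g s = q])
   [set s : seq X | map g s = y :: q] (fun p => p.1 :: p.2)); last first.
  split.
  - by move=> [x s] [/= -> ->].
  - by move=> [x s] [x' s'] _ _ /= [-> ->].
  - move=> [|x s] //= [gx ms]; by exists (x, s).
rewrite -(esum_esum (J := fun=> [set s : seq X | map g s = q])
          (a := fun x s => (wprod w k (x :: s))%:E)); last first.
  by move=> x s _ _; rewrite lee_fin wprod_ge0.
apply: (le_trans (y := \esum_(x in [set x | g x = y]) (w k x)%:E)); last exact: hw.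
apply: le_esum => x _ /=.
under eq_esum do rewrite EFinM.
rewrite esumeMl ?lee_fin //; last by move=> s _; rewrite lee_fin wprod_ge0.
by rewrite -{2}(mule1 (w k x)%:E) lee_wpmul2l // lee_fin.
Qed.

Variables (d : measure_display) (M : measurableType d) (R : realType)
  (mu : {measure set M -> \bar R}).

Lemma esum_integral (T : countType) (I : set T) (F : T -> M -> \bar R) (D : set M) :
  measurable D -> (forall t, measurable_fun D (F t)) ->
  (forall t y, 0 <= F t y) ->
  \int[mu]_(y in D) (\esum_(t in I) F t y) = \esum_(t in I) \int[mu]_(y in D) F t y.
Proof.
move=> mD mF F0.
rewrite esum_series; last by move=> t _; apply: integral_ge0.
under eq_integral => y _ do rewrite esum_series //.
rewrite (@integral_nneseries _ _ _ mu D mD (fun n y => oapp (fun t => if t \in I then F t y else 0) 0 (pickle_inv n))) //.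
- apply: eq_eseriesr => n _; case: (pickle_inv n) => [t|] /=; last by rewrite integral0.
  by case: ifPn => //; rewrite integral0.
- move=> n; case: (pickle_inv n) => [t|] /=; last exact: measurable_cst.
  by case: (t \in I); [exact: mF | exact: measurable_cst].
- by move=> n y _; case: (pickle_inv n) => [t|] //=; case: ifPn.
Qed.

Lemma measurable_esum (T : countType) (I : set T) (F : T -> M -> \bar R) (D : set M) :
  (forall t, measurable_fun D (F t)) -> (forall t y, 0 <= F t y) ->
  measurable_fun D (fun y => \esum_(t in I) F t y).
Proof.
move=> mF F0.
have -> : (fun y => \esum_(t in I) F t y) =
   (fun y => \sum_(n <oo) oapp (fun t => if t \in I then F t y else 0) 0 (pickle_inv n)).
  by apply/funext => y; rewrite esum_series.
apply: ge0_emeasurable_sum.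
- by move=> n y _ _; case: (pickle_inv n) => [t|] //=; case: ifPn.
- move=> n _; case: (pickle_inv n) => [t|] /=; last exact: measurable_cst.
  by case: (t \in I); [exact: mF | exact: measurable_cst].
Qed.

Lemma measurable_prodR (I : Type) (s : seq I) (P : pred I) (F : I -> M -> R) (D : set M) :
  measurable D -> (forall i, measurable_fun D (F i)) ->
  measurable_fun D (fun y => (\prod_(i <- s | P i) F i y)%R).
Proof.
move=> mD mF; elim: s => [|i s IH].
  by under eq_fun do rewrite big_nil; exact: measurable_cst.
under eq_fun do rewrite big_cons.
case: (P i) => //; exact: measurable_funM.
Qed.

End Gen.
Arguments wprod {R X}.

Set Implicit Arguments.
Unset Strict Implicit.
Unset Printing Implicit Defensive.

Section Mdp.
Variables (R : realType) (S A H : nat) (rv : nat -> R)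
  (d : measure_display) (M : measurableType d) (P : probability M R)
  (mdl : M -> model R S A H)
  (Nph nlrn : nat) (epsp : R) (tb : {set Pol S A H} -> Pol S A H).
Hypothesis rv01 : forall k, 0 <= rv k <= 1.
Hypothesis valid : forall y, valid_model (mdl y).
Hypothesis minit : forall x, measurable_fun setT (fun y => init (mdl y) x).
Hypothesis mtrans : forall x a h x', measurable_fun setT (fun y => trans (mdl y) x a h x').
Hypothesis mrew : forall x a h k, measurable_fun setT (fun y => rew (mdl y) x a h k).

Local Notation rec := (rec S A H Nph).
Local Notation Wf := (@Wfun R S A H rv d M P mdl Nph nlrn epsp tb).
Local Notation WW := (@W R S A H rv d M P mdl Nph nlrn epsp tb).

Lemma init_ge0 y x : 0 <= init (mdl y) x.
Proof. by case: (valid y) => -[]. Qed.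
Lemma trans_ge0 y x a h x' : 0 <= trans (mdl y) x a h x'.
Proof. by case: (valid y). Qed.
Lemma rew_ge0 y x a h k : 0 <= rew (mdl y) x a h k.
Proof. by case: (valid y). Qed.

Lemma trajprob_ge0 y pi tau : 0 <= trajprob (mdl y) pi tau.
Proof.
rewrite /trajprob; apply: mulr_ge0; first apply: mulr_ge0.
- by apply: prodr_ge0 => i _; exact: init_ge0.
- by apply: prodr_ge0 => i _; apply: mulr_ge0 => //; exact: rew_ge0.
- by apply: prodr_ge0 => i _; apply: prodr_ge0 => j _; exact: trans_ge0.
Qed.

Lemma measurable_trajprob pi tau :
  measurable_fun setT (fun y => trajprob (mdl y) pi tau).
Proof.
rewrite /trajprob; apply: measurable_funM; first apply: measurable_funM.
- by apply: measurable_prodR => // i; exact: minit.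
- apply: measurable_prodR => // i; apply: measurable_funM; first exact: measurable_cst.
  exact: mrew.
- apply: measurable_prodR => // i; apply: measurable_prodR => // j; exact: mtrans.
Qed.

Lemma halprob_ge0 y (h : seq rec) sig : 0 <= halprob nlrn (mdl y) h sig.
Proof.
rewrite /halprob; case: ifP => // _; apply: prodr_ge0 => p _; apply: prodr_ge0 => i _.
by case: (tnth p.2 i).2 => // k; exact: rew_ge0.
Qed.

Lemma measurable_halprob (h : seq rec) sig :
  measurable_fun setT (fun y => halprob nlrn (mdl y) h sig).
Proof.
rewrite /halprob; case: (_ && _); last exact: measurable_cst.
apply: measurable_prodR => // p; apply: measurable_prodR => // i /=.
by case: (tnth p.2 i).2 => [k|]; [exact: mrew | exact: measurable_cst].
Qed.

Lemma cprob_ge0 y U pi c : (0 <= cprob (mdl y) U pi c)%E.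
Proof. by apply: esum_ge0 => tau _; rewrite lee_fin trajprob_ge0. Qed.

Lemma measurable_cprob U pi c : measurable_fun setT (fun y => cprob (mdl y) U pi c).
Proof.
apply: measurable_esum => [tau|tau y]; last by rewrite lee_fin trajprob_ge0.
by apply/measurable_EFinP; exact: measurable_trajprob.
Qed.

Lemma measurable_prodE (I : Type) (s : seq I) (Q : pred I) (F : I -> M -> \bar R) (D : set M) :
  (forall i, measurable_fun D (F i)) ->
  measurable_fun D (fun y => (\prod_(i <- s | Q i) F i y)%E).
Proof.
move=> mF; elim: s => [|i s IH].
  by under eq_fun do rewrite big_nil; exact: measurable_cst.
under eq_fun do rewrite big_cons.
case: (Q i) => //; exact: emeasurable_funM.
Qed.

Definition CL (U : {set Triple S A H}) (lam2 : seq (Pol S A H * CTraj S A H)) (y : M) : \bar R :=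
  (\prod_(p <- lam2) cprob (mdl y) U p.1 p.2)%E.

Lemma CL_ge0 U lam2 y : (0 <= CL U lam2 y)%E.
Proof. by apply: prode_ge0 => p _; exact: cprob_ge0. Qed.

Lemma measurable_CL U lam2 : measurable_fun setT (CL U lam2).
Proof. by apply: measurable_prodE => p; exact: measurable_cprob. Qed.

Lemma Qhal_ge0 (Wg : seq rec -> M -> \bar R) n (h : seq rec) sig :
  (forall h y, (0 <= Wg h y)%E) -> 0 <= Qhal rv P mdl nlrn epsp Wg n h sig.
Proof.
move=> Wg0; rewrite /Qhal; case: ifP => _.
  by apply: fine_ge0; apply: integral_ge0 => y _; rewrite lee_fin halprob_ge0.
apply: divr_ge0; apply: fine_ge0; apply: esum_ge0 => h' _; apply: integral_ge0 => y _ //.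
by rewrite mule_ge0 // lee_fin halprob_ge0.
Qed.

Lemma Wfun_ge0 n (h : seq rec) y : (0 <= Wf n h y)%E.
Proof.
elim: n h y => [|n IH] h y /=; first by case: h.
case: ifP => // _; case: (drop n h) => [|r [|]] //.
rewrite mule_ge0 // /stepw lee_fin; apply: mulr_ge0; last exact: trajprob_ge0.
apply: mulr_ge0 => //; apply: mulr_ge0; first by rewrite invr_ge0.
by apply: Qhal_ge0.
Qed.

Lemma stepwE (Wg : seq rec -> M -> \bar R) n (h : seq rec) (r : rec) y :
  stepw rv P mdl nlrn epsp tb Wg n h r y =
  ((Nph%:R^-1 * Qhal rv P mdl nlrn epsp Wg n h (r_sig r) *
    (r_pol r == agent rv P mdl nlrn epsp tb Wg n (r_sig r))%:R) *
   trajprob (mdl y) (r_pol r) (r_traj r))%:E.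
Proof. by []. Qed.

Lemma measurable_stepw (Wg : seq rec -> M -> \bar R) n (h : seq rec) (r : rec) :
  measurable_fun setT (stepw rv P mdl nlrn epsp tb Wg n h r).
Proof.
rewrite /stepw; apply/measurable_EFinP; apply: measurable_funM; first exact: measurable_cst.
exact: measurable_trajprob.
Qed.

Lemma measurable_Wfun n (h : seq rec) : measurable_fun setT (Wf n h).
Proof.
elim: n h => [|n IH] h /=; first by case: h => [|? ?]; exact: measurable_cst.
case: (size h == n.+1); last exact: IH.
case: (drop n h) => [|r [|r' l]]; try exact: measurable_cst.
apply: emeasurable_funM => //.
exact: measurable_stepw.
Qed.

Lemma W_rcons (h : seq rec) (r : rec) y :
  WW (rcons h r) y = (WW h y * stepw rv P mdl nlrn epsp tb (Wf (size h)) (size h) h r y)%E.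
Proof.
rewrite /W size_rcons /= size_rcons eqxx.
have E1 : drop (size h) (rcons h r) = [:: r] by rewrite -cats1 drop_size_cat.
have E2 : take (size h) (rcons h r) = h by rewrite -cats1 take_size_cat.
by rewrite E1 E2.
Qed.


Definition Gmap (U : {set Triple S A H}) (h : seq rec) :=
  [seq (r_pol r, censor U (r_traj r)) | r <- h].

Definition sameSA (tau tau' : Traj S A H) := forall i, (tnth tau i).1 = (tnth tau' i).1.

Lemma censor_fst U (tau : Traj S A H) i : (tnth (censor U tau) i).1 = (tnth tau i).1.
Proof. by rewrite /censor tnth_mktuple /=; case: (tnth tau i).1. Qed.

Lemma censor_eq_fst U (tau tau' : Traj S A H) :
  censor U tau = censor U tau' -> sameSA tau tau'.
Proof. by move=> E i; rewrite -!(censor_fst U) E. Qed.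

Lemma Gmap_map U (h h' : seq rec) (T : Type) (F : rec -> T) :
  Gmap U h = Gmap U h' ->
  (forall r r', r_pol r = r_pol r' -> sameSA (r_traj r) (r_traj r') -> F r = F r') ->
  map F h = map F h'.
Proof.
elim: h h' => [|r h IH] [|r' h'] //= [E1 E2 E3] HF.
congr (_ :: _); first by apply: HF E1 _; apply: (@censor_eq_fst U); apply: val_inj; exact: E2.
exact: IH E3 HF.
Qed.

Lemma censorT_same (tau tau' : Traj S A H) :
  sameSA tau tau' -> censor [set: Triple S A H]%SET tau = censor [set: Triple S A H]%SET tau'.
Proof. by move=> E; apply: eq_from_tnth => i; rewrite !tnth_mktuple /triple_at !inE (E i). Qed.

Lemma pattern_same V (tau tau' : Traj S A H) :
  sameSA tau tau' -> pattern (censor V tau) = pattern (censor V tau').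
Proof.
move=> E; rewrite /pattern.
pose f := fun s : CStep S A => (s.1.1, s.1.2, s.2 != None).
suff : map_tuple f (censor V tau) = map_tuple f (censor V tau') by move/(congr1 val).
apply: eq_from_tnth => i; rewrite !tnth_map /censor ?tnth_map !tnth_ord_tuple /f /triple_at /= (E i).
by case: (_ \in V).
Qed.

Lemma Ucal_same U (h h' : seq rec) : Gmap U h = Gmap U h' -> Ucal nlrn h = Ucal nlrn h'.
Proof.
move=> E; apply/setP => t; rewrite !inE.
have Hm : map (fun r => visited (r_traj r) t) h = map (fun r => visited (r_traj r) t) h'.
  by apply: (Gmap_map E) => r r' _ Es; rewrite /visited /triple_at (Es t.2).
by have := congr1 (count id) Hm; rewrite !count_map => ->.
Qed.

Lemma cens_same U (h h' : seq rec) : Gmap U h = Gmap U h' -> cens_ledger h = cens_ledger h'.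
Proof.
move=> E; rewrite /cens_ledger; congr pair.
by apply: (Gmap_map E) => r r' Ep Es; rewrite Ep (censorT_same Es).
Qed.

Lemma plist_same U V (h h' : seq rec) : Gmap U h = Gmap U h' ->
  [seq (r_pol r, pattern (censor V (r_traj r))) | r <- h] =
  [seq (r_pol r, pattern (censor V (r_traj r))) | r <- h'].
Proof. by move=> E; apply: (Gmap_map E) => r r' Ep Es; rewrite Ep (pattern_same _ Es). Qed.

Lemma Qhal_same U (Wg : seq rec -> M -> \bar R) n (h h' : seq rec) sig :
  Gmap U h = Gmap U h' ->
  Qhal rv P mdl nlrn epsp Wg n h sig = Qhal rv P mdl nlrn epsp Wg n h' sig.
Proof.
move=> E; rewrite /Qhal /halprob (cens_same E) (Ucal_same E).
by rewrite (plist_same (Ucal nlrn h') E).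
Qed.


Hypothesis S0 : (0 < S)%N.
Hypothesis A0 : (0 < A)%N.

Definition psi y (i : 'I_H) (cs : CStep S A) : R :=
  if cs.2 is Some k then rew (mdl y) cs.1.1 cs.1.2 i k else 1.
Definition phi y (c : CTraj S A H) : R := \prod_(i < H) psi y i (tnth c i).

Lemma psi_ge0 y i cs : 0 <= psi y i cs.
Proof. by rewrite /psi; case: cs.2 => // k; exact: rew_ge0. Qed.

Lemma phi_ge0 y c : 0 <= phi y c.
Proof. by apply: prodr_ge0 => i _; exact: psi_ge0. Qed.

Lemma rew_sum1 y x a i : (\esum_(k in [set: nat]) (rew (mdl y) x a i k)%:E = 1)%E.
Proof.
rewrite -nneseries_esumT; last by move=> k; rewrite lee_fin rew_ge0.
by case: (valid y).
Qed.

Definition wk y (k : nat) (cs : CStep S A) : R :=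
  match insub k with
  | Some i => psi y i cs
  | None => if cs.2 is Some r then (r == 0%N)%:R else 1
  end.

Lemma wk_ge0 y k cs : 0 <= wk y k cs.
Proof. by rewrite /wk; case: insub => [i|]; [exact: psi_ge0 | case: cs.2]. Qed.

Definition gS (cs : CStep S A) := (cs.1.1, cs.1.2, cs.2 != None).

Lemma sum_wk y k y0 : (\esum_(cs in [set cs | gS cs = y0]) (wk y k cs)%:E <= 1)%E.
Proof.
case: y0 => [[x a] [|]].
  rewrite (_ : [set cs | gS cs = (x, a, true)] = (fun r => (x, a, Some r)) @` [set: nat]); last first.
    apply/seteqP; split => [[[x' a'] [r|]]|cs] /= E; first by case: E => -> ->; exists r.
      by case: E.
    by case: E => r _ <-.
  rewrite esum_image; last by move=> r r' _ _ [].
  rewrite /wk; case: insub => [i|].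
    by rewrite /psi /= rew_sum1.
  rewrite (esumID [set 0%N]); last by move=> r _; rewrite lee_fin; case: (r == 0%N).
  rewrite setTI esum_set1 /= ?lee_fin // esum1 ?adde0 //.
  by move=> r [_ /= /eqP /negPf ->].
rewrite (_ : [set cs | gS cs = (x, a, false)] = [set (x, a, None)]); last first.
  apply/seteqP; split => [[[x' a'] [r|]]|cs] /= E; try by case: E.
    by case: E => -> ->.
  by rewrite E.
rewrite esum_set1 /wk; last by rewrite lee_fin; case: insub => [i|] //; rewrite /psi.
by case: insub => [i|] //.
Qed.

Lemma phi_wprod y (c : CTraj S A H) : phi y c = wprod (wk y) 0 c.
Proof.
pose x0 : CStep S A := (Ordinal S0, Ordinal A0, None).
rewrite (@wprodE _ _ _ x0) size_tuple big_mkord /phi; apply: eq_bigr => i _.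
by rewrite add0n /wk valK (tnth_nth x0).
Qed.

Lemma sum_ctraj y pt : (\esum_(c in [set c : CTraj S A H | pattern c = pt]) (phi y c)%:E <= 1)%E.
Proof.
under eq_esum do rewrite phi_wprod.
rewrite -(esum_image _ (fun c : CTraj S A H => tval c) (fun s => (wprod (wk y) 0 s)%:E)); last first.
  by move=> c c' _ _; apply: val_inj.
apply: le_trans (@esum_wprod _ _ _ gS _ (@wk_ge0 y) (@sum_wk y) pt 0).
apply: esum_sub; last by move=> s _; rewrite lee_fin wprod_ge0 // => ? ?; exact: wk_ge0.
by move=> s [c /= <- <-].
Qed.

Lemma prod_wprod y (L : seq (Pol S A H * CTraj S A H)) :
  \prod_(p <- L) phi y p.2 = wprod (fun _ p => phi y p.2) 0 L.
Proof.
elim: L 0%N => [|p L IH] k; first by rewrite big_nil.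
by rewrite big_cons /= (IH k.+1).
Qed.

Lemma sum_halprob y (h : seq rec) :
  (\esum_(sig in [set: ledger S A H]) (halprob nlrn (mdl y) h sig)%:E <= 1)%E.
Proof.
set U := Ucal nlrn h.
set T := [seq (r_pol r, pattern (censor U (r_traj r))) | r <- h].
pose gp := fun p : Pol S A H * CTraj S A H => (p.1, pattern p.2).
pose Sg := [set sig : ledger S A H | sig.1 = U /\ map gp sig.2 = T].
rewrite (esumID Sg); last by move=> sig _; rewrite lee_fin halprob_ge0.
rewrite [X in (_ + X)%E]esum1 ?adde0; last first.
  move=> [U' L] [_ /= nS]; rewrite /halprob /=.
  case: ifP => // /andP [/eqP E1 /eqP E2]; exfalso; apply: nS; split => //.
rewrite setTI.
rewrite (_ : Sg = (fun L => (U, L)) @` [set L | map gp L = T]); last first.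
  apply/seteqP; split => [[U' L] [/= -> E]|sig [L /= E <-]]; first by exists L.
  by split.
rewrite esum_image; last by move=> L L' _ _ [].
have -> : \esum_(L in [set L | map gp L = T]) (halprob nlrn (mdl y) h (U, L))%:E =
          \esum_(L in [set L | map gp L = T]) (wprod (fun _ p => phi y p.2) 0 L)%:E.
  apply: eq_esum => L /= E; rewrite /halprob /= -/U eqxx /=.
  by rewrite -/T -E eqxx /= prod_wprod.
apply: esum_wprod => [k p|k [pol pt]]; first exact: phi_ge0.
rewrite (_ : [set p | gp p = (pol, pt)] = (fun c => (pol, c)) @` [set c | pattern c = pt]).
  by rewrite esum_image; [exact: sum_ctraj | move=> c c' _ _ []].
apply/seteqP; split => [[pol' c] [/= -> E]|p [c /= E <-]]; first by exists c.
by rewrite /gp /= E.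
Qed.


Lemma measurable_meanrew x a i : measurable_fun setT (fun y => meanrew rv (mdl y) x a i).
Proof.
rewrite /meanrew.
apply: (@measurableT_comp _ _ _ _ _ _ fine _
  (fun y => \sum_(k <oo) ((rew (mdl y) x a i k * rv k)%:E))%E).
  exact: fine_measurable.
apply: ge0_emeasurable_sum.
  by move=> k y _ _; rewrite lee_fin mulr_ge0 ?rew_ge0 //; case/andP: (rv01 k).
move=> k _; apply/measurable_EFinP; apply: measurable_funM; first exact: mrew.
exact: measurable_cst.
Qed.

Lemma measurable_Epun U : measurable (Epun rv mdl epsp U).
Proof.
rewrite (_ : Epun rv mdl epsp U = \bigcap_(t in [set t : Triple S A H | t \notin U])
   (setT `&` (fun y => meanrew rv (mdl y) t.1.1 t.1.2 t.2) @^-1` `]-oo, epsp])); last first.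
  apply/seteqP; split => y /=.
    by move=> Hy t tU; split => //=; rewrite in_itv /=; exact: Hy.
  by move=> Hy t tU; have [_] := Hy t tU; rewrite /= in_itv.
apply: fin_bigcap_measurable; first exact: finite_finset.
move=> t _.
have := @measurable_meanrew t.1.1 t.1.2 t.2 measurableT _ (measurable_itv `]-oo, epsp]%R).
exact.
Qed.

Lemma fine_lee (x : \bar R) : (0 <= x)%E -> ((fine x)%:E <= x)%E.
Proof. by case: x => [r| |] //= _; rewrite leey. Qed.

Lemma Qsum_le1 (Wg : seq rec -> M -> \bar R) n (h : seq rec) :
  (forall h y, (0 <= Wg h y)%E) -> (forall h, measurable_fun setT (Wg h)) ->
  (\esum_(sig in [set: ledger S A H]) (Qhal rv P mdl nlrn epsp Wg n h sig)%:E <= 1)%E.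
Proof.
move=> Wg0 mWg; rewrite /Qhal; cbv zeta.
set D := [set h' : seq rec | _].
set E := Epun rv mdl epsp (Ucal nlrn h).
set den := (\esum_(h' in D) \int[P]_(y in E) Wg h' y)%E.
have mE : measurable E by exact: measurable_Epun.
have den0 : (0 <= den)%E by apply: esum_ge0 => h' _; apply: integral_ge0.
have mhal : forall sig, measurable_fun setT (fun y => (halprob nlrn (mdl y) h sig)%:E).
  by move=> sig; apply/measurable_EFinP; exact: measurable_halprob.
case Edz: (den == 0%E).
  have dz : den = 0%E by apply/eqP.
  clear Edz.
  apply: (@le_trans _ _ (\esum_(sig in [set: ledger S A H])
      \int[P]_(y in setT) (halprob nlrn (mdl y) h sig)%:E)%E).
    apply: le_esum => sig _; apply: fine_lee; apply: integral_ge0 => y _.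
    by rewrite lee_fin halprob_ge0.
  rewrite -esum_integral //; last by move=> sig y; rewrite lee_fin halprob_ge0.
  apply: (@le_trans _ _ (\int[P]_(y in setT) (cst 1%E y))%E).
    apply: ge0_le_integral => //.
    - by move=> y _; apply: esum_ge0 => sig _; rewrite lee_fin halprob_ge0.
    - by apply: measurable_esum => // sig y; rewrite lee_fin halprob_ge0.
    - by move=> y _; exact: sum_halprob.
  by rewrite integral_cst // mul1e; apply: probability_le1.
have dnz : den != 0%E by rewrite Edz.
clear Edz.
under eq_esum do rewrite EFinM muleC.
rewrite esumZl; last 2 first.
- by rewrite invr_ge0 fine_ge0.
- move=> sig _; rewrite lee_fin fine_ge0 // esum_ge0 // => h' _; apply: integral_ge0 => y _.
  by rewrite mule_ge0 // lee_fin halprob_ge0.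
apply: (@le_trans _ _ ((fine den)^-1%:E * den)%E); last first.
  move: den0 dnz; case: den => [r| |] //= r0 rn0.
    by rewrite -EFinM mulVf // lee_fin.
  by rewrite invr0 mul0e.
apply: lee_wpmul2l; first by rewrite lee_fin invr_ge0 fine_ge0.
apply: (@le_trans _ _ (\esum_(sig in [set: ledger S A H]) \esum_(h' in D)
    \int[P]_(y in E) ((halprob nlrn (mdl y) h sig)%:E * Wg h' y))%E).
  apply: le_esum => sig _; apply: fine_lee; apply: esum_ge0 => h' _.
  by apply: integral_ge0 => y _; rewrite mule_ge0 // lee_fin halprob_ge0.
rewrite esum_swap; last first.
  by move=> sig h' _ _; apply: integral_ge0 => y _; rewrite mule_ge0 // lee_fin halprob_ge0.
apply: le_esum => h' _.
rewrite -esum_integral //; last 2 first.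
- move=> sig; apply: emeasurable_funM; first exact: measurable_funS (mhal sig).
  exact: measurable_funS (mWg h').
- by move=> sig y; rewrite mule_ge0 // lee_fin halprob_ge0.
have Hrw : forall y, (\esum_(sig in [set: ledger S A H]) ((halprob nlrn (mdl y) h sig)%:E * Wg h' y) =
   (\esum_(sig in [set: ledger S A H]) (halprob nlrn (mdl y) h sig)%:E) * Wg h' y)%E.
  by move=> y; rewrite esumeMr // => sig _; rewrite lee_fin halprob_ge0.
under eq_integral do rewrite Hrw.
apply: ge0_le_integral => //.
- by move=> y _; rewrite mule_ge0 // esum_ge0 // => sig _; rewrite lee_fin halprob_ge0.
- apply: emeasurable_funM; last exact: measurable_funS (mWg h').
  apply: measurable_esum => [sig|sig y]; first exact: measurable_funS (mhal sig).
  by rewrite lee_fin halprob_ge0.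
- exact: measurable_funS (mWg h').
- move=> y _; rewrite -{2}(mul1e (Wg h' y)); apply: lee_wpmul2r => //.
  exact: sum_halprob.
Qed.


Lemma WW_ge0 (h : seq rec) y : (0 <= WW h y)%E.
Proof. exact: Wfun_ge0. Qed.

Lemma measurable_WW (h : seq rec) : measurable_fun setT (WW h).
Proof. exact: measurable_Wfun. Qed.

Lemma finite_sum_ord (c : 'I_Nph * ledger S A H -> R) :
  (forall os, 0 <= c os) -> (forall o, \esum_(s in [set: ledger S A H]) (c (o, s))%:E <= 1)%E ->
  (\esum_(os in [set: 'I_Nph * ledger S A H]) (c os)%:E \is a fin_num).
Proof.
move=> c0 cs.
have c0' : forall os, (0 <= (c os)%:E)%E by move=> os; rewrite lee_fin.
rewrite ge0_fin_numE; last by apply: esum_ge0.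
rewrite (_ : [set: 'I_Nph * ledger S A H] = [set: 'I_Nph] `*`` fun=> [set: ledger S A H]); last first.
  by apply/seteqP; split => [[o s]|[o s]].
rewrite (eq_esum (b := fun k => (fun o s => (c (o, s))%:E) k.1 k.2)); last by move=> [o s].
rewrite -(esum_esum (a := fun o s => (c (o, s))%:E)) //.
apply: (@le_lt_trans _ _ (\esum_(o in [set: 'I_Nph]) (1%R)%:E)%E).
  by apply: le_esum => o _; exact: cs.
rewrite esum_fset; [|exact: finite_finset|by move=> o _; rewrite lee_fin].
by rewrite fsbig_finite ?sumEFin ?ltry //; exact: finite_finset.
Qed.

Lemma main_claim (U : {set Triple S A H}) n : forall lam2, size lam2 = n ->
  exists K : R, 0 <= K /\ forall B, measurable B -> forall f : M -> \bar R,
    measurable_fun setT f -> (forall y, (0 <= f y)%E) ->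
    (\esum_(h in [set h : seq rec | size h = n /\ Gmap U h = lam2])
        \int[P]_(y in B) (WW h y * f y)
     = K%:E * \int[P]_(y in B) (CL U lam2 y * f y))%E.
Proof.
elim: n => [|n IH] lam2.
  move=> /size0nil ->; exists 1; split => // B mB f mf f0.
  rewrite (_ : [set h : seq rec | size h = 0%N /\ Gmap U h = [::]] = [set [::]]); last first.
    by apply/seteqP; split => [h [/size0nil ->]|h ->].
  rewrite esum_set1; last by apply: integral_ge0 => y _; rewrite mule_ge0 // WW_ge0.
  rewrite mul1e; apply: eq_integral => y _.
  by rewrite /CL big_nil /W /=.
case/lastP: lam2 => [//|lam2 p]; rewrite size_rcons => -[sz].
have [K [K0 HK]] := IH lam2 sz.
pose Sn := [set h : seq rec | size h = n /\ Gmap U h = lam2].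
have [[h0 [sh0 Gh0]]|nS] := pselect (exists h0, Sn h0); last first.
  exists 0; split => // B mB f mf f0; rewrite mul0e; apply: esum1 => h [sh Gh].
  exfalso; apply: nS; move: sh Gh; case/lastP: h => [//|h r].
  rewrite size_rcons /Gmap map_rcons => -[sh] /rcons_inj [Gh _]; by exists h.
pose c0 := fun os : 'I_Nph * ledger S A H =>
  (Nph%:R^-1 * Qhal rv P mdl nlrn epsp (Wf n) n h0 os.2 *
  (p.1 == agent rv P mdl nlrn epsp tb (Wf n) n os.2)%:R : R).
have Wf0 : forall (h : seq rec) y, (0 <= Wf n h y)%E by move=> h y; exact: Wfun_ge0.
have c0ge : forall os, 0 <= c0 os.
  move=> os; apply: mulr_ge0 => //; apply: mulr_ge0; first by rewrite invr_ge0.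
  exact: Qhal_ge0.
have Cfin : \esum_(os in [set: 'I_Nph * ledger S A H]) (c0 os)%:E \is a fin_num.
  apply: finite_sum_ord => // o.
  apply: le_trans (Qsum_le1 n h0 Wf0 (@measurable_Wfun n)).
  apply: le_esum => sig _; rewrite lee_fin /c0 /=.
  set a := Nph%:R^-1; set q := Qhal _ _ _ _ _ _ _ _ _; set b := (_ == _)%:R.
  have q0 : 0 <= q by exact: Qhal_ge0.
  have a0 : 0 <= a by rewrite invr_ge0.
  have Nph0 : (0 < Nph)%N by apply: (leq_ltn_trans (leq0n o) (ltn_ord o)).
  have hN : (1 <= Nph%:R :> R) by rewrite ler1n.
  have a1 : a <= 1 by rewrite /a invf_le1 ?(lt_le_trans ltr01 hN).
  have b0 : 0 <= b by rewrite /b; case: (_ == _).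
  have b1 : b <= 1 by rewrite /b; case: (_ == _).
  have ab1 : a * b <= 1 by nra.
  nra.
pose C := fine (\esum_(os in [set: 'I_Nph * ledger S A H]) (c0 os)%:E).
have C0 : 0 <= C by apply: fine_ge0; apply: esum_ge0 => os _; rewrite lee_fin.
have HC : \esum_(os in [set: 'I_Nph * ledger S A H]) (c0 os)%:E = C%:E by rewrite /C fineK.
exists (C * K); split; first exact: mulr_ge0.
move=> B mB f mf f0.
pose Rp := [set r : rec | r_pol r = p.1 /\ censor U (r_traj r) = p.2].
pose G := fun h : seq rec => (\int[P]_(y in B) (WW h y * f y))%E.
have G0 : forall h, (0 <= G h)%E.
  by move=> h; apply: integral_ge0 => y _; rewrite mule_ge0 // WW_ge0.
have pE : (p.1, p.2) = p by case: p {HK Cfin c0ge HC C C0 Rp c0}.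
have -> : \esum_(h in [set h : seq rec | size h = n.+1 /\ Gmap U h = rcons lam2 p]) G h =
    \esum_(r in Rp) \esum_(h in Sn) G (rcons h r).
  rewrite (esum_esum (J := fun=> Sn) (a := fun r h => G (rcons h r))); last by move=> *; exact: G0.
  rewrite (reindex_esum (Rp `*`` fun=> Sn) _ (fun k => rcons k.2 k.1)) //.
  split.
  - move=> [r h] [/= [Er Ec] [sh Gh]]; split; first by rewrite size_rcons sh.
    by rewrite /Gmap map_rcons -/(Gmap U h) Gh Er Ec pE.
  - by move=> [r h] [r' h'] _ _ /= /rcons_inj [-> ->].
  - move=> h [sh Gh]; move: sh Gh; case/lastP: h => [//|h r].
    rewrite size_rcons => -[sh]; rewrite /Gmap map_rcons => /rcons_inj [Gh Ep].
    by exists (r, h) => //; split; split => //; rewrite -Ep.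
have step2 : forall r, Rp r -> (\esum_(h in Sn) G (rcons h r) =
    (c0 r.1.1)%:E * (K%:E * \int[P]_(y in B)
      (CL U lam2 y * ((trajprob (mdl y) (r_pol r) (r_traj r))%:E * f y))))%E.
  move=> r [Er Ec].
  have mtf : measurable_fun setT (fun y => (trajprob (mdl y) (r_pol r) (r_traj r))%:E * f y)%E.
    by apply: emeasurable_funM => //; apply/measurable_EFinP; exact: measurable_trajprob.
  have tf0 : forall y, (0 <= (trajprob (mdl y) (r_pol r) (r_traj r))%:E * f y)%E.
    by move=> y; rewrite mule_ge0 // lee_fin trajprob_ge0.
  have Hc : forall h, Sn h -> (G (rcons h r) = (c0 r.1.1)%:E * \int[P]_(y in B)
      (WW h y * ((trajprob (mdl y) (r_pol r) (r_traj r))%:E * f y)))%E.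
    move=> h [sh Gh].
    have mh : measurable_fun B (fun y => WW h y * ((trajprob (mdl y) (r_pol r) (r_traj r))%:E * f y))%E.
      exact: (measurable_funS measurableT (@subsetT _ B) (emeasurable_funM (measurable_WW h) mtf)).
    have nh : forall y, B y -> (0 <= WW h y * ((trajprob (mdl y) (r_pol r) (r_traj r))%:E * f y))%E.
      by move=> y _; rewrite mule_ge0 // WW_ge0.
    rewrite /G -(@ge0_integralZl_EFin _ _ _ P B mB _ nh mh _ (c0ge r.1.1)).
    apply: eq_integral => y _.
    rewrite W_rcons sh stepwE (@Qhal_same U _ _ h h0); last by rewrite Gh Gh0.
    rewrite Er EFinM /c0 /=.
    set a := (_ * _)%:E; set b := (trajprob _ _ _)%:E.
    by rewrite muleA (muleC (WW h y) a) -!muleA.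
  rewrite (eq_esum Hc) esumZl //; last by move=> h _; apply: integral_ge0 => y _; rewrite mule_ge0 // WW_ge0.
  by rewrite (HK B mB _ mtf tf0).
rewrite (eq_esum step2).
pose Tp := [set tau : Traj S A H | censor U tau = p.2].
rewrite (reindex_esum ([set: 'I_Nph * ledger S A H] `*`` fun=> Tp) Rp
    (fun k => (k.1, p.1, k.2))); last first.
  split.
  - by move=> [os tau] [_ /= Ht].
  - by move=> [os tau] [os' tau'] _ _ /= [-> ->].
  - move=> [[os pol] tau] [/= Ep Ec]; exists (os, tau) => //=.
    by rewrite -Ep.
pose X := fun tau : Traj S A H => (K%:E * \int[P]_(y in B)
      (CL U lam2 y * ((trajprob (mdl y) p.1 tau)%:E * f y)))%E.
have X0 : forall tau, (0 <= X tau)%E.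
  move=> tau; rewrite mule_ge0 ?lee_fin // integral_ge0 // => y _.
  by rewrite mule_ge0 ?CL_ge0 // mule_ge0 // lee_fin trajprob_ge0.
rewrite (eq_esum (b := fun k => (fun os tau => (c0 os)%:E * X tau)%E k.1 k.2)); last by move=> [os tau].
rewrite -(esum_esum (a := fun os tau => ((c0 os)%:E * X tau)%E)); last first.
  by move=> os tau _ _; rewrite mule_ge0 // lee_fin.
have inner : (\esum_(tau in Tp) X tau = K%:E * \int[P]_(y in B)
      (CL U lam2 y * (cprob (mdl y) U p.1 p.2 * f y)))%E.
  rewrite /X esumZl //; last first.
    move=> tau _; apply: integral_ge0 => y _.
    by rewrite mule_ge0 ?CL_ge0 // mule_ge0 // lee_fin trajprob_ge0.
  congr (_ * _)%E.
  rewrite -esum_integral //; last 2 first.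
  - move=> tau; apply: (measurable_funS measurableT (@subsetT _ B)); apply: emeasurable_funM; first exact: measurable_CL.
    by apply: emeasurable_funM => //; apply/measurable_EFinP; exact: measurable_trajprob.
  - by move=> tau y; rewrite mule_ge0 ?CL_ge0 // mule_ge0 // lee_fin trajprob_ge0.
  apply: eq_integral => y _.
  rewrite esumeMl ?CL_ge0 //; last by move=> tau _; rewrite mule_ge0 // lee_fin trajprob_ge0.
  by rewrite esumeMr //; move=> tau _; rewrite lee_fin trajprob_ge0.
under eq_esum do rewrite esumZl ?lee_fin // inner.
rewrite esumeMr; last 2 first.
- by rewrite -inner; apply: esum_ge0 => tau _.
- by move=> os _; rewrite lee_fin.
rewrite HC EFinM -muleA; congr (_ * (_ * _))%E.
apply: eq_integral => y _.
by rewrite /CL big_rcons /= muleA.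
Qed.

Lemma fine_EFinM (K : R) (x : \bar R) : fine (K%:E * x)%E = K * fine x.
Proof.
case: x => [r| |] /=; first by [].
- rewrite mulry; have [K0|K0|->] := ltgtP K 0.
  + by rewrite ltr0_sg // mulN1e /= mulr0.
  + by rewrite gtr0_sg // mul1e /= mulr0.
  + by rewrite sgr0 mul0e /= mulr0.
- rewrite mulrNy; have [K0|K0|->] := ltgtP K 0.
  + by rewrite ltr0_sg // mulN1e /= mulr0.
  + by rewrite gtr0_sg // mul1e /= mulr0.
  + by rewrite sgr0 mul0e /= mulr0.
Qed.

Lemma post_eq (L : seq rec -> ledger S A H) l lam (K : R) :
  (0 < joint rv P mdl nlrn epsp tb L l lam setT)%E ->
  (forall B, measurable B -> joint rv P mdl nlrn epsp tb L l lam B =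
     K%:E * \int[P]_(y in B) can_lik (mdl y) lam)%E ->
  forall B, measurable B ->
    true_post rv P mdl nlrn epsp tb L l lam B = can_post P mdl lam B.
Proof.
move=> jpos HJ B mB; rewrite /true_post /can_post (HJ B mB) (HJ setT measurableT).
rewrite !fine_EFinM.
have K0 : K != 0.
  apply/eqP => K0; move: jpos; rewrite (HJ setT measurableT) K0 mul0e.
  by rewrite ltxx.
by rewrite -mulf_div divff // mul1r.
Qed.

Lemma joint_claim U l (h0 : seq rec) (L : seq rec -> ledger S A H) lam :
  size h0 = l.-1 ->
  [set h : seq rec | size h = l.-1 /\ L h = lam] =
  [set h : seq rec | size h = l.-1 /\ Gmap U h = Gmap U h0] ->
  lam.1 = U -> lam.2 = Gmap U h0 ->
  exists K : R, forall B, measurable B -> (joint rv P mdl nlrn epsp tb L l lam B =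
     K%:E * \int[P]_(y in B) can_lik (mdl y) lam)%E.
Proof.
move=> sh0 Eset E1 E2.
have sz : size (Gmap U h0) = l.-1 by rewrite size_map.
have [K [K0 HK]] := @main_claim U l.-1 (Gmap U h0) sz.
exists K => B mB; rewrite /joint Eset.
have := HK B mB (cst 1%E) (measurable_cst _) (fun _ => lee01).
under eq_esum do under eq_integral do rewrite mule1.
move=> ->; congr (_ * _)%E; apply: eq_integral => y _.
by rewrite mule1 /CL /can_lik E1 E2.
Qed.

Lemma final_cens l lam :
  (0 < joint rv P mdl nlrn epsp tb (@cens_ledger S A H Nph) l lam setT)%E ->
  forall B, measurable B ->
    true_post rv P mdl nlrn epsp tb (@cens_ledger S A H Nph) l lam B = can_post P mdl lam B.
Proof.
move=> jpos.
suff [K HK] : exists K : R, forall B, measurable B ->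
    (joint rv P mdl nlrn epsp tb (@cens_ledger S A H Nph) l lam B =
     K%:E * \int[P]_(y in B) can_lik (mdl y) lam)%E.
  exact: post_eq jpos HK.
have [[h0 [sh0 Eh0]]|nS] := pselect (exists h0 : seq rec, size h0 = l.-1 /\ cens_ledger h0 = lam); last first.
  exfalso; move: jpos; rewrite /joint esum1 ?ltxx // => h [sh Eh].
  by exfalso; apply: nS; exists h.
subst lam.
apply: (@joint_claim [set: Triple S A H]%SET l h0) => //.
apply/seteqP; split => h [sh E]; split => //; first by case: E.
by rewrite /cens_ledger -/(Gmap _ h) E.
Qed.

Lemma final_hon l lam :
  (0 < joint rv P mdl nlrn epsp tb (@hon_ledger S A H Nph nlrn) l lam setT)%E ->
  forall B, measurable B ->
    true_post rv P mdl nlrn epsp tb (@hon_ledger S A H Nph nlrn) l lam B = can_post P mdl lam B.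
Proof.
move=> jpos.
suff [K HK] : exists K : R, forall B, measurable B ->
    (joint rv P mdl nlrn epsp tb (@hon_ledger S A H Nph nlrn) l lam B =
     K%:E * \int[P]_(y in B) can_lik (mdl y) lam)%E.
  exact: post_eq jpos HK.
have [[h0 [sh0 Eh0]]|nS] := pselect (exists h0 : seq rec, size h0 = l.-1 /\ hon_ledger nlrn h0 = lam); last first.
  exfalso; move: jpos; rewrite /joint esum1 ?ltxx // => h [sh Eh].
  by exfalso; apply: nS; exists h.
subst lam.
apply: (@joint_claim (Ucal nlrn h0) l h0) => //.
apply/seteqP; split => h [sh E]; split => //.
  by move: E; rewrite /hon_ledger => -[E1 E2]; rewrite /Gmap -[in LHS]E1; exact: E2.
have EU : Ucal nlrn h = Ucal nlrn h0 by apply: (Ucal_same E).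
by rewrite /hon_ledger EU -/(Gmap _ h) E.
Qed.

End Mdp.

Theorem lemma1 (R : realType) (S A H : nat) (rv : nat -> R)
  (d : measure_display) (M : measurableType d) (P : probability M R)
  (mdl : M -> model R S A H)
  (Nph nlrn : nat) (epsp : R) (tb : {set Pol S A H} -> Pol S A H) :
  (0 < S)%N -> (0 < A)%N -> (0 < H)%N -> (0 < Nph)%N ->
  (forall k, 0 <= rv k <= 1) ->
  (forall y, valid_model (mdl y)) ->
  (forall x, measurable_fun setT (fun y => init (mdl y) x)) ->
  (forall x a h x', measurable_fun setT (fun y => trans (mdl y) x a h x')) ->
  (forall x a h k, measurable_fun setT (fun y => rew (mdl y) x a h k)) ->
  (forall X : {set Pol S A H}, (0 < #|X|)%N -> tb X \in X) ->
  forall l : nat, (0 < l)%N ->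
  forall lam : ledger S A H,
    ((0 < joint rv P mdl nlrn epsp tb (@cens_ledger S A H Nph) l lam setT)%E ->
       forall B : set M, measurable B ->
         true_post rv P mdl nlrn epsp tb (@cens_ledger S A H Nph) l lam B
         = can_post P mdl lam B)
    /\
    ((0 < joint rv P mdl nlrn epsp tb (@hon_ledger S A H Nph nlrn) l lam setT)%E ->
       forall B : set M, measurable B ->
         true_post rv P mdl nlrn epsp tb (@hon_ledger S A H Nph nlrn) l lam B
         = can_post P mdl lam B).
Proof.
move=> S0 A0 H0 N0 rv01 valid minit mtrans mrew tbP l l0 lam; split.
- by move=> jpos B mB; apply: final_cens.
- by move=> jpos B mB; apply: final_hon.
Qed.
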